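(* Let $p$ be an odd prime. If $p\ne5$, $$(-1)^{\frac{p-1}2}\sum_{k=0}^{[p/4]}\binom{4k}{2k}\frac1{20^k}\equiv\begin{cases}\pm1\pmod p&\text{if }p\equiv\pm1\pmod5,\\ \pm2\pmod p&\text{if }p\equiv\pm3\pmod5;\end{cases}$$ if $p\ne13$, $$(-1)^{\frac{p-1}2}\sum_{k=0}^{[p/4]}\binom{4k}{2k}\frac1{52^k}\equiv\begin{cases}\pm1\pmod p&\text{if }p\equiv\pm1,\pm3,\pm9\pmod{13},\\ \pm\frac23\pmod p&\text{if }p\equiv\pm2,\pm5,\pm6\pmod{13};\end{cases}$$ and if $p\ne17$, $$\sum_{k=0}^{[p/4]}\binom{4k}{2k}\frac1{17^k}\equiv\begin{cases}1\pmod p&\text{if }p\equiv\pm1,\pm4\pmod{17},\\-1\pmod p&\text{if }p\equiv\pm2,\pm8\pmod{17},\\4\pmod p&\text{if }p\equiv\pm3,\pm5\pmod{17},\\-4\pmod p&\text{if }p\equiv\pm6,\pm7\pmod{17}.\end{cases}$$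
   Context: $[x]$ is the greatest integer $\le x$. *)

(* Defs.v *)
From HB Require Import structures.
From mathcomp Require Import all_boot all_order all_algebra.
Set Implicit Arguments. Unset Strict Implicit. Unset Printing Implicit Defensive.
Import GRing.Theory Num.Theory.
Local Open Scope ring_scope.

Definition binsum (p m : nat) : 'F_p :=
  \sum_(k < (p %/ 4).+1) ('C(4 * k, 2 * k))%:R / (m%:R) ^+ k.

Definition legsign (p : nat) : 'F_p := (-1) ^+ (p.-1)./2.

(* Main.v *)
Require Import Defs.
From HB Require Import structures.
From mathcomp Require Import all_boot all_order all_algebra all_field all_solvable.
From mathcomp Require Import ring lra zify.
Import GRing.Theory Num.Theory.
Local Open Scope ring_scope.

Fixpoint ev {L : comNzRingType} (l : seq int) (z : L) : L :=
  if l is c :: l' then c%:~R + z * ev l' z else 0.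
Fixpoint padd (a b : seq int) : seq int :=
  match a, b with
  | [::], _ => b
  | _, [::] => a
  | x :: a', y :: b' => (x + y) :: padd a' b'
  end.
Definition pscale (c : int) (a : seq int) := map (fun x => c * x) a.
Fixpoint pmul (a b : seq int) : seq int :=
  if a is x :: a' then padd (pscale x b) (0 :: pmul a' b) else [::].
Definition mono (k : nat) (c : int) : seq int := ncons k 0 [:: c].
Fixpoint psubaux (N r k : nat) (l : seq int) : seq int :=
  if l is c :: l' then padd (mono ((k * r) %% N) c) (psubaux N r k.+1 l') else [::].
Definition psub N r l := psubaux N r 0 l.
Definition pzero (l : seq int) := all (fun c => c == 0) l.

Section EvLemmas.
Variable L : comNzRingType.
Implicit Types (z : L).

Lemma ev_padd a b z : ev (padd a b) z = ev a z + ev b z.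
Proof.
elim: a b => [|x a IH] [|y b] /=; rewrite ?add0r ?addr0 //.
by rewrite IH intrD mulrDr addrACA.
Qed.

Lemma ev_pscale c a z : ev (pscale c a) z = c%:~R * ev a z.
Proof.
elim: a => [|x a IH] /=; first by rewrite mulr0.
by rewrite IH intrM mulrDr mulrCA.
Qed.

Lemma ev_pmul a b z : ev (pmul a b) z = ev a z * ev b z.
Proof.
elim: a => [|x a IH] /=; first by rewrite mul0r.
by rewrite ev_padd ev_pscale /= IH add0r mulrDl mulrA.
Qed.

Lemma ev_ncons k a z : ev (ncons k 0 a) z = z ^+ k * ev a z.
Proof.
elim: k => [|k IH] /=; first by rewrite mul1r.
by rewrite IH add0r exprS mulrA.
Qed.

Lemma ev_mono k c z : ev (mono k c) z = c%:~R * z ^+ k.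
Proof. by rewrite /mono ev_ncons /= mulr0 addr0 mulrC. Qed.

Lemma ev_psubaux N r k l z : z ^+ N = 1 ->
  ev (psubaux N r k l) z = (z ^+ r) ^+ k * ev l (z ^+ r).
Proof.
move=> zN; elim: l k => [|c l IH] k /=; first by rewrite mulr0.
rewrite ev_padd ev_mono IH expr_mod // mulnC exprM exprS; ring.
Qed.

Lemma ev_psub N r l z : z ^+ N = 1 -> ev (psub N r l) z = ev l (z ^+ r).
Proof. by move=> zN; rewrite /psub ev_psubaux // expr0 mul1r. Qed.

Lemma ev_single c z : ev [:: c] z = c%:~R.
Proof. by rewrite /= mulr0 addr0. Qed.

Lemma ev_pzero l z : pzero l -> ev l z = 0.
Proof.
elim: l => [|c l IH] //= /andP[/eqP -> /IH ->].
by rewrite mulr0 addr0.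
Qed.

Lemma ev_chk E Q P z : pzero (padd E (pscale (-1) (pmul Q P))) -> ev P z = 0 ->
  ev E z = 0.
Proof.
move=> H HP; have := ev_pzero _ z H.
by rewrite ev_padd ev_pscale ev_pmul HP mulr0 mulr0 addr0.
Qed.

Lemma ev_frob p (pc : p \in [pchar L]) l z : ev l z ^+ p = ev l (z ^+ p).
Proof.
elim: l => [|c l IH] /=; first by rewrite expr0n gtn_eqF // prime_gt0 // (pcharf_prime pc).
rewrite -!(pFrobenius_autE pc) pFrobenius_autD_comm; last exact: mulrC.
rewrite pFrobenius_aut_int pFrobenius_autM_comm; last exact: mulrC.
by rewrite !pFrobenius_autE IH.
Qed.
End EvLemmas.

Definition chk_r (N : nat) (Phi I W Wt : seq int) (A B : int) (Q : seq int) (r : nat) :=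
 let IW := pmul I W in let IWt := pmul I Wt in
 let E := padd (pscale A (pmul IW Wt))
            (pscale (- B) (padd (pmul (psub N r IW) Wt) (pmul (psub N r IWt) W))) in
 pzero (padd E (pscale (-1) (pmul Q Phi))).
Definition chk_all (N : nat) Phi I W Wt (tab : nat -> int * int) Qs :=
  all (fun r => ~~ coprime r N || chk_r N Phi I W Wt (tab r).1 (tab r).2 (nth [::] Qs r) r) (iota 0 N).

Lemma half_fact (p : nat) : odd p -> (p %/ 4 = (p.-1)./2./2)%N /\ ((p.-1)./2.*2.+1 = p)%N.
Proof. move=> hp; have : (p %% 2 = 1)%N by rewrite modn2 hp.
rewrite -!divn2 -!muln2; lia. Qed.

Lemma sum_double (R : nzRingType) (F : nat -> R) K :
  \sum_(0 <= j < K.*2) F j = \sum_(0 <= k < K) (F k.*2 + F k.*2.+1).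
Proof.
elim: K => [|K IH]; first by rewrite !big_geq.
by rewrite doubleS !big_nat_recr //= IH addrA.
Qed.

Lemma sum_pairs (R : nzRingType) (F : nat -> R) h : (forall j, (h < j)%N -> F j = 0) ->
  \sum_(i < h.+1) F i = \sum_(k < (h./2).+1) (F k.*2 + F k.*2.+1).
Proof.
move=> F0; rewrite -(big_mkord xpredT F) -(big_mkord xpredT (fun k => F k.*2 + F k.*2.+1)) -sum_double.
have hle : (h.+1 <= (h./2).+1.*2)%N.
  by rewrite doubleS ltnS -{1}(odd_double_half h) -addnn; case: (odd h) => /=; lia.
rewrite (big_cat_nat (leq0n _) hle) /= [X in _ + X]big1_seq ?addr0 //.
by move=> j /andP[_]; rewrite mem_iota => /andP[hj _]; apply: F0.
Qed.

Section Binom.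
Variable L : fieldType.
Variable p : nat.
Hypothesis pc : p \in [pchar L].
Hypothesis hodd : odd p.
Let h := ((p.-1)./2)%N.
Let hp : prime p := pcharf_prime pc.

Lemma natL_neq0 n : (0 < n < p)%N -> n%:R != 0 :> L.
Proof.
move=> /andP[n0 np]; rewrite -(dvdn_pcharf pc); apply/negP => /(dvdn_leq n0).
by rewrite leqNgt np.
Qed.

Lemma hh : (h.*2.+1 = p)%N. Proof. by case: (half_fact _ hodd). Qed.

Lemma two_h : (h.*2)%:R = -1 :> L.
Proof.
apply/eqP; rewrite -subr_eq0 opprK -(natrD _ _ 1) addn1 hh.
by rewrite (pcharf0 pc).
Qed.

Lemma binom_cong n : (n <= h)%N -> ('C(n.*2, n))%:R = (-4)^+n * ('C(h, n))%:R :> L.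
Proof.
elim: n => [|n IH] hn; first by rewrite !bin0 expr0 mul1r.
have hn' : (n <= h)%N by apply: ltnW.
have n1 : (n.+1)%:R != 0 :> L.
  apply: natL_neq0; rewrite ltn0Sn /= -hh; apply: leq_ltn_trans hn _.
  by rewrite -addnn ltnS leq_addl.
have e1 : ('C(n.+1.*2, n.+1) * (n.+1 * n.+1) = (n.+1.*2 * n.*2.+1) * 'C(n.*2, n))%N.
  have a := mul_bin_diag n.+1.*2 n.
  have b := mul_bin_diag n.*2.+1 n.
  have c : 'C(n.*2.+1, n.+1) = 'C(n.*2.+1, n).
    by rewrite -bin_sub ?subSS -?addnn ?addnK // ltnS leq_addr.
  rewrite /= in a b; rewrite c in b.
  rewrite doubleS /= in a *.
  move: a b; set X := 'C(_, _); set Y := 'C(_, _); set Z := 'C(_, _).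
  rewrite -!muln2; nia.
have e2 := mul_bin_left h n.
apply: (mulIf (mulf_neq0 n1 n1)).
rewrite -!natrM e1 !natrM IH //.
have e2' : ((n.+1)%:R * ('C(h, n.+1))%:R = (h%:R - n%:R) * ('C(h, n))%:R :> L).
  by rewrite -natrM e2 natrM natrB.
have th := two_h; rewrite -muln2 natrM in th.
have E1 : (n.+1.*2)%:R = (n%:R + 1) * 2 :> L by rewrite -muln2 natrM natr1.
have E2 : (n.*2.+1)%:R = n%:R * 2 + 1 :> L by rewrite -natr1 -muln2 natrM.
rewrite exprS; set P := (-4) ^+ n; set C0 := ('C(h, n))%:R; set C1 := ('C(h, n.+1))%:R.
rewrite E1 E2 -!natr1; rewrite -!natr1 in e2'.
apply/eqP; rewrite -subr_eq0; apply/eqP.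
transitivity (P * C0 * 2 * (n%:R + 1) * (1 + h%:R * 2) - P * (-4) * (n%:R + 1) *
   ((n%:R + 1) * C1 - (h%:R - n%:R) * C0) :> L).
  ring.
by rewrite e2' subrr mulr0 th addrN mulr0 subr0.
Qed.

Lemma sum_id (m : nat) (u : L) : u ^+ 2 * m%:R = 16 -> m%:R != 0 :> L ->
  2 * (\sum_(k < (p %/ 4).+1) ('C(4 * k, 2 * k))%:R / (m%:R) ^+ k) =
  (1 + u) ^+ h + (1 - u) ^+ h.
Proof.
move=> hu hm.
rewrite (addrC 1 u) (addrC (1 : L) (-u)) !exprD1n -big_split /=.
rewrite (@sum_pairs _ (fun i => u ^+ i *+ 'C(h, i) + (- u) ^+ i *+ 'C(h, i))); last first.
  by move=> j hj; rewrite bin_small // !mulr0n addr0.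
have -> : (p %/ 4 = h./2)%N by case: (half_fact _ hodd).
rewrite mulr_sumr; apply: eq_bigr => k _.
have hk : (k.*2 <= h)%N.
  apply: (@leq_trans (h./2.*2)); first by rewrite leq_double -ltnS.
  by rewrite -{2}(odd_double_half h) leq_addl.
rewrite exprNn -signr_odd odd_double expr0 mul1r.
rewrite exprNn -signr_odd /= odd_double /= expr1 mulN1r mulNrn addrN addr0.
have e4 : (4 * k = k.*2.*2)%N by rewrite -!muln2; lia.
have e2 : (2 * k = k.*2)%N by rewrite -muln2 mulnC.
rewrite e4 e2 binom_cong //.
have u2 : u ^+ 2 = 16 / m%:R by rewrite -hu mulfK.
have s4 : (-4) ^+ 2 = 16 :> L.
  rewrite sqrrN expr2. rewrite -natrM. done.
rewrite -mul2n !(exprM _ 2 k) s4 u2 expr_div_n.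
set X := (16 : L) ^+ k; set Y := (m%:R : L) ^+ k.
rewrite -mulr2n -mulrnA -[RHS]mulr_natl natrM.
ring.
Qed.

Lemma frob_sq (w c : L) : w ^+ 2 = c ^+ 2 * (1 + 0) -> True. Proof. by []. Qed.

Lemma dpow (d : nat) : d%:R != 0 :> L -> (d%:R : L) ^+ h.*2 = 1.
Proof.
move=> d0; apply: (mulIf d0); rewrite mul1r -exprSr hh.
by rewrite -(pFrobenius_autE pc) pFrobenius_aut_nat.
Qed.

Lemma wpow (w c d : L) : w ^+ 2 = d ^+ 2 * c -> d ^+ h.*2 = 1 -> w ^+ p = c ^+ h * w.
Proof.
move=> hw hd; rewrite -hh exprSr -mul2n exprM hw exprMn -exprM mul2n hd mul1r.
done.
Qed.

Lemma two_neq0 : 2 != 0 :> L.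
Proof.
apply: natL_neq0; rewrite /= ltn_neqAle prime_gt1 // andbT.
by apply/eqP => p2; move: hodd; rewrite -p2.
Qed.

Lemma gen (N : nat) (z : L) (Phi I W Wt U : seq int) (e d m : nat) (sg : L)
    (tab : nat -> int * int) (Qs : seq (seq int)) :
  (0 < N)%N -> z ^+ N = 1 -> ev Phi z = 0 ->
  chk_all N Phi I W Wt tab Qs ->
  coprime (p %% N)%N N ->
  (ev U z / e%:R) ^+ 2 * m%:R = 16 ->
  ev W z ^+ 2 = d%:R ^+ 2 * (1 + ev U z / e%:R) ->
  ev Wt z ^+ 2 = d%:R ^+ 2 * (1 - ev U z / e%:R) ->
  d%:R != 0 :> L -> m%:R != 0 :> L -> m%:R != 16 :> L ->
  ev I z ^+ p = sg * ev I z -> ev I z != 0 ->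
  ((tab (p %% N)%N).2)%:~R != 0 :> L ->
  sg * (\sum_(k < (p %/ 4).+1) ('C(4 * k, 2 * k))%:R / (m%:R) ^+ k) =
    ((tab (p %% N)%N).1)%:~R / (2 * ((tab (p %% N)%N).2)%:~R).
Proof.
move=> N0 zN hPhi hchk hcop; set u := ev U z / e%:R => hu hW hWt d0 m0 m16 hI I0 B0.
set r := (p %% N)%N; set A := (tab r).1; set B := (tab r).2.
have hr : chk_r N Phi I W Wt A B (nth [::] Qs r) r.
  move/allP: hchk => /(_ r); rewrite mem_iota add0n ltn_mod N0 hcop /=.
  by move=> /(_ isT).
have E := @ev_chk _ _ _ _ z hr hPhi.
rewrite !ev_padd !ev_pscale !ev_padd !ev_pmul in E. rewrite !(@ev_psub _ _ _ _ _ zN) !ev_pmul in E.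
have zr : z ^+ r = z ^+ p by rewrite /r expr_mod.
rewrite zr -!(ev_frob _ _ pc) in E.
set w := ev W z in hW E; set wt := ev Wt z in hWt E; set i := ev I z in hI I0 E.
have hd := dpow d d0.
rewrite (wpow _ _ _ hW hd) (wpow _ _ _ hWt hd) hI in E.
have w0 : w != 0.
  apply/negP => /eqP w0; move: hW; rewrite w0 expr0n /= => /esym /eqP.
  rewrite mulf_eq0 expf_eq0 (negbTE d0) andbF /= addr_eq0 => /eqP hu1.
  by move: hu; rewrite -[u]opprK -hu1 sqrrN expr1n mul1r => /eqP; rewrite (negbTE m16).
have wt0 : wt != 0.
  apply/negP => /eqP wt0; move: hWt; rewrite wt0 expr0n /= => /esym /eqP.
  rewrite mulf_eq0 expf_eq0 (negbTE d0) andbF /= subr_eq0 => /eqP hu1.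
  by move: hu; rewrite -hu1 expr1n mul1r => /eqP; rewrite (negbTE m16).
have X0 : i * w * wt != 0 by rewrite !mulf_neq0.
have S2 := sum_id _ _ hu m0.
set S := \sum_(k < (p %/ 4).+1) _ in S2 *.
have E2 : A%:~R * (i * w * wt) = (B%:~R * sg * (2 * S)) * (i * w * wt).
  rewrite S2; apply/eqP; rewrite -subr_eq0; apply/eqP; rewrite -[RHS]E; ring.
have E3 := mulIf X0 E2.
apply: (mulIf (mulf_neq0 two_neq0 B0)); rewrite divfK ?mulf_neq0 ?two_neq0 // E3; ring.
Qed.
End Binom.

Definition Phi20 : seq int := [:: Posz 1; Posz 0; Negz 0; Posz 0; Posz 1; Posz 0; Negz 0; Posz 0; Posz 1].
Definition U20 : seq int := [:: Posz 0; Posz 0; Posz 0; Posz 0; Posz 2; Posz 0; Posz 0; Posz 0; Negz 1; Posz 0; Posz 0; Posz 0; Negz 1; Posz 0; Posz 0; Posz 0; Posz 2].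
Definition W20 : seq int := [:: Posz 0; Posz 3; Posz 0; Posz 1; Posz 0; Posz 0; Posz 0; Posz 0; Posz 0; Posz 0; Posz 0; Posz 0; Posz 0; Posz 0; Posz 0; Posz 0; Posz 0; Posz 1; Posz 0; Posz 3].
Definition Wt20 : seq int := [:: Posz 0; Posz 0; Posz 0; Posz 3; Posz 0; Posz 0; Posz 0; Posz 0; Posz 0; Posz 1; Posz 0; Posz 1; Posz 0; Posz 0; Posz 0; Posz 0; Posz 0; Posz 3].
Definition Qs20 : seq (seq int) := [:: [:: ];
  [:: Posz 0; Posz 0; Posz 0; Negz 8; Posz 0; Negz 14; Posz 0; Negz 14; Posz 0; Negz 8; Posz 0; Negz 0; Posz 0; Posz 4; Posz 0; Posz 8; Posz 0; Posz 12; Posz 0; Posz 3; Posz 0; Negz 22; Posz 0; Negz 12; Posz 0; Posz 7; Posz 0; Posz 3; Posz 0; Posz 6; Posz 0; Posz 24; Posz 0; Posz 18];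
  [:: ];
  [:: Posz 0; Posz 0; Posz 0; Negz 2; Posz 0; Negz 12; Posz 0; Negz 24; Posz 0; Posz 12; Posz 0; Posz 38; Posz 0; Posz 13; Posz 0; Posz 13; Posz 0; Posz 41; Posz 0; Posz 6; Posz 0; Negz 55; Posz 0; Negz 15; Posz 0; Posz 19; Posz 0; Posz 3; Posz 0; Posz 12; Posz 0; Posz 48; Posz 0; Posz 36];
  [:: ];
  [:: ];
  [:: ];
  [:: Posz 0; Posz 0; Posz 0; Posz 0; Posz 0; Negz 8; Posz 0; Negz 8; Posz 0; Negz 35; Posz 0; Negz 59; Posz 0; Negz 29; Posz 0; Negz 18; Posz 0; Negz 46; Posz 0; Negz 22; Posz 0; Posz 34; Posz 0; Negz 7; Posz 0; Negz 52; Posz 0; Negz 24; Posz 0; Negz 14; Posz 0; Negz 47; Posz 0; Negz 35];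
  [:: ];
  [:: Posz 0; Posz 0; Posz 0; Posz 0; Posz 0; Negz 2; Posz 0; Negz 6; Posz 0; Negz 22; Posz 0; Negz 24; Posz 0; Negz 14; Posz 0; Negz 17; Posz 0; Negz 21; Posz 0; Negz 13; Posz 0; Negz 2; Posz 0; Negz 18; Posz 0; Negz 28; Posz 0; Negz 20; Posz 0; Negz 14; Posz 0; Negz 23; Posz 0; Negz 17];
  [:: ];
  [:: Posz 0; Posz 0; Posz 0; Negz 8; Posz 0; Negz 14; Posz 0; Negz 14; Posz 0; Negz 8; Posz 0; Negz 0; Posz 0; Posz 4; Posz 0; Posz 8; Posz 0; Posz 12; Posz 0; Posz 3; Posz 0; Negz 22; Posz 0; Negz 12; Posz 0; Posz 7; Posz 0; Posz 3; Posz 0; Posz 6; Posz 0; Posz 24; Posz 0; Posz 18];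
  [:: ];
  [:: Posz 0; Posz 0; Posz 0; Negz 2; Posz 0; Negz 12; Posz 0; Negz 24; Posz 0; Posz 12; Posz 0; Posz 38; Posz 0; Posz 13; Posz 0; Posz 13; Posz 0; Posz 41; Posz 0; Posz 6; Posz 0; Negz 55; Posz 0; Negz 15; Posz 0; Posz 19; Posz 0; Posz 3; Posz 0; Posz 12; Posz 0; Posz 48; Posz 0; Posz 36];
  [:: ];
  [:: ];
  [:: ];
  [:: Posz 0; Posz 0; Posz 0; Posz 0; Posz 0; Negz 8; Posz 0; Negz 8; Posz 0; Negz 35; Posz 0; Negz 59; Posz 0; Negz 29; Posz 0; Negz 18; Posz 0; Negz 46; Posz 0; Negz 22; Posz 0; Posz 34; Posz 0; Negz 7; Posz 0; Negz 52; Posz 0; Negz 24; Posz 0; Negz 14; Posz 0; Negz 47; Posz 0; Negz 35];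
  [:: ];
  [:: Posz 0; Posz 0; Posz 0; Posz 0; Posz 0; Negz 2; Posz 0; Negz 6; Posz 0; Negz 22; Posz 0; Negz 24; Posz 0; Negz 14; Posz 0; Negz 17; Posz 0; Negz 21; Posz 0; Negz 13; Posz 0; Negz 2; Posz 0; Negz 18; Posz 0; Negz 28; Posz 0; Negz 20; Posz 0; Negz 14; Posz 0; Negz 23; Posz 0; Negz 17]].
Definition Phi52 : seq int := [:: Posz 1; Posz 0; Negz 0; Posz 0; Posz 1; Posz 0; Negz 0; Posz 0; Posz 1; Posz 0; Negz 0; Posz 0; Posz 1; Posz 0; Negz 0; Posz 0; Posz 1; Posz 0; Negz 0; Posz 0; Posz 1; Posz 0; Negz 0; Posz 0; Posz 1].
Definition U52 : seq int := [:: Posz 0; Posz 0; Posz 0; Posz 0; Posz 2; Posz 0; Posz 0; Posz 0; Negz 1; Posz 0; Posz 0; Posz 0; Posz 2; Posz 0; Posz 0; Posz 0; Posz 2; Posz 0; Posz 0; Posz 0; Negz 1; Posz 0; Posz 0; Posz 0; Negz 1; Posz 0; Posz 0; Posz 0; Negz 1; Posz 0; Posz 0; Posz 0; Negz 1; Posz 0; Posz 0; Posz 0; Posz 2; Posz 0; Posz 0; Posz 0; Posz 2; Posz 0; Posz 0; Posz 0; Negz 1; Posz 0; Posz 0; Posz 0; Posz 2].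
Definition W52 : seq int := [:: Posz 0; Negz 0; Posz 0; Posz 0; Posz 0; Posz 5; Posz 0; Posz 5; Posz 0; Negz 0; Posz 0; Posz 5; Posz 0; Posz 0; Posz 0; Posz 0; Posz 0; Posz 0; Posz 0; Posz 0; Posz 0; Posz 0; Posz 0; Negz 0; Posz 0; Posz 0; Posz 0; Posz 0; Posz 0; Negz 0; Posz 0; Posz 0; Posz 0; Posz 0; Posz 0; Posz 0; Posz 0; Posz 0; Posz 0; Posz 0; Posz 0; Posz 5; Posz 0; Negz 0; Posz 0; Posz 5; Posz 0; Posz 5; Posz 0; Posz 0; Posz 0; Negz 0].
Definition Wt52 : seq int := [:: Posz 0; Posz 0; Posz 0; Posz 5; Posz 0; Negz 0; Posz 0; Negz 0; Posz 0; Posz 0; Posz 0; Negz 0; Posz 0; Posz 0; Posz 0; Posz 0; Posz 0; Posz 5; Posz 0; Posz 0; Posz 0; Posz 0; Posz 0; Posz 0; Posz 0; Posz 5; Posz 0; Posz 5; Posz 0; Posz 0; Posz 0; Posz 0; Posz 0; Posz 0; Posz 0; Posz 5; Posz 0; Posz 0; Posz 0; Posz 0; Posz 0; Negz 0; Posz 0; Posz 0; Posz 0; Negz 0; Posz 0; Negz 0; Posz 0; Posz 5].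
Definition Qs52 : seq (seq int) := [:: [:: ];
  [:: Posz 0; Posz 0; Posz 0; Negz 0; Posz 0; Negz 25; Posz 0; Negz 10; Posz 0; Negz 2; Posz 0; Negz 28; Posz 0; Posz 18; Posz 0; Posz 18; Posz 0; Negz 28; Posz 0; Negz 27; Posz 0; Negz 30; Posz 0; Negz 45; Posz 0; Negz 51; Posz 0; Negz 50; Posz 0; Negz 39; Posz 0; Negz 11; Posz 0; Negz 55; Posz 0; Negz 67; Posz 0; Negz 17; Posz 0; Negz 23; Posz 0; Negz 27; Posz 0; Negz 10; Posz 0; Posz 11; Posz 0; Posz 54; Posz 0; Posz 89; Posz 0; Posz 28; Posz 0; Posz 37; Posz 0; Posz 29; Posz 0; Negz 53; Posz 0; Posz 13; Posz 0; Posz 79; Posz 0; Posz 57; Posz 0; Posz 6; Posz 0; Posz 10; Posz 0; Posz 40; Posz 0; Posz 17; Posz 0; Negz 22; Posz 0; Negz 42; Posz 0; Posz 24; Posz 0; Posz 14; Posz 0; Posz 12; Posz 0; Posz 92; Posz 0; Posz 54; Posz 0; Negz 7; Posz 0; Negz 9];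
  [:: ];
  [:: Posz 0; Posz 0; Posz 0; Negz 0; Posz 0; Negz 25; Posz 0; Negz 10; Posz 0; Negz 2; Posz 0; Negz 28; Posz 0; Posz 18; Posz 0; Posz 18; Posz 0; Negz 28; Posz 0; Negz 27; Posz 0; Negz 30; Posz 0; Negz 45; Posz 0; Negz 51; Posz 0; Negz 50; Posz 0; Negz 39; Posz 0; Negz 11; Posz 0; Negz 55; Posz 0; Negz 67; Posz 0; Negz 17; Posz 0; Negz 23; Posz 0; Negz 27; Posz 0; Negz 10; Posz 0; Posz 11; Posz 0; Posz 54; Posz 0; Posz 89; Posz 0; Posz 28; Posz 0; Posz 37; Posz 0; Posz 29; Posz 0; Negz 53; Posz 0; Posz 13; Posz 0; Posz 79; Posz 0; Posz 57; Posz 0; Posz 6; Posz 0; Posz 10; Posz 0; Posz 40; Posz 0; Posz 17; Posz 0; Negz 22; Posz 0; Negz 42; Posz 0; Posz 24; Posz 0; Posz 14; Posz 0; Posz 12; Posz 0; Posz 92; Posz 0; Posz 54; Posz 0; Negz 7; Posz 0; Negz 9];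
  [:: ];
  [:: Posz 0; Posz 0; Posz 0; Posz 0; Posz 0; Posz 15; Posz 0; Posz 12; Posz 0; Posz 9; Posz 0; Posz 21; Posz 0; Negz 74; Posz 0; Negz 56; Posz 0; Posz 31; Posz 0; Negz 57; Posz 0; Posz 117; Posz 0; Posz 316; Posz 0; Posz 87; Posz 0; Posz 16; Posz 0; Posz 54; Posz 0; Negz 80; Posz 0; Negz 244; Posz 0; Negz 185; Posz 0; Posz 6; Posz 0; Negz 196; Posz 0; Negz 308; Posz 0; Negz 148; Posz 0; Posz 141; Posz 0; Posz 79; Posz 0; Negz 229; Posz 0; Negz 147; Posz 0; Negz 41; Posz 0; Negz 75; Posz 0; Negz 115; Posz 0; Posz 127; Posz 0; Posz 195; Posz 0; Negz 4; Posz 0; Negz 314; Posz 0; Negz 220; Posz 0; Posz 120; Posz 0; Negz 80; Posz 0; Negz 193; Posz 0; Negz 83; Posz 0; Posz 63; Posz 0; Posz 28; Posz 0; Posz 24; Posz 0; Posz 184; Posz 0; Posz 108; Posz 0; Negz 15; Posz 0; Negz 19];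
  [:: ];
  [:: Posz 0; Posz 0; Posz 0; Posz 15; Posz 0; Posz 12; Posz 0; Negz 137; Posz 0; Negz 164; Posz 0; Negz 59; Posz 0; Negz 260; Posz 0; Negz 338; Posz 0; Negz 192; Posz 0; Negz 88; Posz 0; Negz 140; Posz 0; Negz 267; Posz 0; Negz 239; Posz 0; Negz 225; Posz 0; Negz 335; Posz 0; Negz 413; Posz 0; Negz 24; Posz 0; Posz 69; Posz 0; Negz 224; Posz 0; Negz 216; Posz 0; Negz 104; Posz 0; Negz 69; Posz 0; Negz 257; Posz 0; Negz 348; Posz 0; Negz 264; Posz 0; Negz 133; Posz 0; Negz 167; Posz 0; Negz 76; Posz 0; Posz 164; Posz 0; Negz 150; Posz 0; Negz 341; Posz 0; Negz 156; Posz 0; Negz 80; Posz 0; Negz 114; Posz 0; Negz 158; Posz 0; Negz 74; Posz 0; Posz 68; Posz 0; Posz 111; Posz 0; Negz 47; Posz 0; Negz 27; Posz 0; Negz 23; Posz 0; Negz 183; Posz 0; Negz 107; Posz 0; Posz 16; Posz 0; Posz 20];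
  [:: ];
  [:: Posz 0; Posz 0; Posz 0; Negz 0; Posz 0; Negz 25; Posz 0; Negz 10; Posz 0; Negz 2; Posz 0; Negz 28; Posz 0; Posz 18; Posz 0; Posz 18; Posz 0; Negz 28; Posz 0; Negz 27; Posz 0; Negz 30; Posz 0; Negz 45; Posz 0; Negz 51; Posz 0; Negz 50; Posz 0; Negz 39; Posz 0; Negz 11; Posz 0; Negz 55; Posz 0; Negz 67; Posz 0; Negz 17; Posz 0; Negz 23; Posz 0; Negz 27; Posz 0; Negz 10; Posz 0; Posz 11; Posz 0; Posz 54; Posz 0; Posz 89; Posz 0; Posz 28; Posz 0; Posz 37; Posz 0; Posz 29; Posz 0; Negz 53; Posz 0; Posz 13; Posz 0; Posz 79; Posz 0; Posz 57; Posz 0; Posz 6; Posz 0; Posz 10; Posz 0; Posz 40; Posz 0; Posz 17; Posz 0; Negz 22; Posz 0; Negz 42; Posz 0; Posz 24; Posz 0; Posz 14; Posz 0; Posz 12; Posz 0; Posz 92; Posz 0; Posz 54; Posz 0; Negz 7; Posz 0; Negz 9];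
  [:: ];
  [:: Posz 0; Posz 0; Posz 0; Posz 15; Posz 0; Posz 12; Posz 0; Negz 137; Posz 0; Negz 164; Posz 0; Negz 59; Posz 0; Negz 260; Posz 0; Negz 338; Posz 0; Negz 192; Posz 0; Negz 88; Posz 0; Negz 140; Posz 0; Negz 267; Posz 0; Negz 239; Posz 0; Negz 225; Posz 0; Negz 335; Posz 0; Negz 413; Posz 0; Negz 24; Posz 0; Posz 69; Posz 0; Negz 224; Posz 0; Negz 216; Posz 0; Negz 104; Posz 0; Negz 69; Posz 0; Negz 257; Posz 0; Negz 348; Posz 0; Negz 264; Posz 0; Negz 133; Posz 0; Negz 167; Posz 0; Negz 76; Posz 0; Posz 164; Posz 0; Negz 150; Posz 0; Negz 341; Posz 0; Negz 156; Posz 0; Negz 80; Posz 0; Negz 114; Posz 0; Negz 158; Posz 0; Negz 74; Posz 0; Posz 68; Posz 0; Posz 111; Posz 0; Negz 47; Posz 0; Negz 27; Posz 0; Negz 23; Posz 0; Negz 183; Posz 0; Negz 107; Posz 0; Posz 16; Posz 0; Posz 20];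
  [:: ];
  [:: ];
  [:: ];
  [:: Posz 0; Posz 0; Posz 0; Posz 0; Posz 0; Posz 15; Posz 0; Posz 12; Posz 0; Posz 9; Posz 0; Posz 21; Posz 0; Negz 74; Posz 0; Negz 56; Posz 0; Posz 31; Posz 0; Negz 57; Posz 0; Posz 117; Posz 0; Posz 316; Posz 0; Posz 87; Posz 0; Posz 16; Posz 0; Posz 54; Posz 0; Negz 80; Posz 0; Negz 244; Posz 0; Negz 185; Posz 0; Posz 6; Posz 0; Negz 196; Posz 0; Negz 308; Posz 0; Negz 148; Posz 0; Posz 141; Posz 0; Posz 79; Posz 0; Negz 229; Posz 0; Negz 147; Posz 0; Negz 41; Posz 0; Negz 75; Posz 0; Negz 115; Posz 0; Posz 127; Posz 0; Posz 195; Posz 0; Negz 4; Posz 0; Negz 314; Posz 0; Negz 220; Posz 0; Posz 120; Posz 0; Negz 80; Posz 0; Negz 193; Posz 0; Negz 83; Posz 0; Posz 63; Posz 0; Posz 28; Posz 0; Posz 24; Posz 0; Posz 184; Posz 0; Posz 108; Posz 0; Negz 15; Posz 0; Negz 19];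
  [:: ];
  [:: Posz 0; Posz 0; Posz 0; Posz 0; Posz 0; Posz 5; Posz 0; Posz 5; Posz 0; Negz 24; Posz 0; Negz 49; Posz 0; Negz 9; Posz 0; Negz 5; Posz 0; Negz 36; Posz 0; Negz 62; Posz 0; Negz 120; Posz 0; Negz 129; Posz 0; Negz 52; Posz 0; Negz 54; Posz 0; Negz 65; Posz 0; Negz 2; Posz 0; Posz 2; Posz 0; Negz 24; Posz 0; Negz 48; Posz 0; Posz 18; Posz 0; Posz 22; Posz 0; Negz 55; Posz 0; Negz 103; Posz 0; Negz 107; Posz 0; Negz 103; Posz 0; Negz 133; Posz 0; Negz 142; Posz 0; Negz 133; Posz 0; Negz 121; Posz 0; Negz 164; Posz 0; Negz 169; Posz 0; Negz 122; Posz 0; Posz 6; Posz 0; Negz 1; Posz 0; Negz 118; Posz 0; Negz 44; Posz 0; Posz 17; Posz 0; Posz 22; Posz 0; Negz 24; Posz 0; Negz 13; Posz 0; Negz 11; Posz 0; Negz 91; Posz 0; Negz 53; Posz 0; Posz 8; Posz 0; Posz 10];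
  [:: ];
  [:: Posz 0; Posz 0; Posz 0; Posz 0; Posz 0; Posz 15; Posz 0; Posz 12; Posz 0; Posz 9; Posz 0; Posz 21; Posz 0; Negz 74; Posz 0; Negz 56; Posz 0; Posz 31; Posz 0; Negz 57; Posz 0; Posz 117; Posz 0; Posz 316; Posz 0; Posz 87; Posz 0; Posz 16; Posz 0; Posz 54; Posz 0; Negz 80; Posz 0; Negz 244; Posz 0; Negz 185; Posz 0; Posz 6; Posz 0; Negz 196; Posz 0; Negz 308; Posz 0; Negz 148; Posz 0; Posz 141; Posz 0; Posz 79; Posz 0; Negz 229; Posz 0; Negz 147; Posz 0; Negz 41; Posz 0; Negz 75; Posz 0; Negz 115; Posz 0; Posz 127; Posz 0; Posz 195; Posz 0; Negz 4; Posz 0; Negz 314; Posz 0; Negz 220; Posz 0; Posz 120; Posz 0; Negz 80; Posz 0; Negz 193; Posz 0; Negz 83; Posz 0; Posz 63; Posz 0; Posz 28; Posz 0; Posz 24; Posz 0; Posz 184; Posz 0; Posz 108; Posz 0; Negz 15; Posz 0; Negz 19];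
  [:: ];
  [:: Posz 0; Posz 0; Posz 0; Posz 15; Posz 0; Posz 12; Posz 0; Negz 137; Posz 0; Negz 164; Posz 0; Negz 59; Posz 0; Negz 260; Posz 0; Negz 338; Posz 0; Negz 192; Posz 0; Negz 88; Posz 0; Negz 140; Posz 0; Negz 267; Posz 0; Negz 239; Posz 0; Negz 225; Posz 0; Negz 335; Posz 0; Negz 413; Posz 0; Negz 24; Posz 0; Posz 69; Posz 0; Negz 224; Posz 0; Negz 216; Posz 0; Negz 104; Posz 0; Negz 69; Posz 0; Negz 257; Posz 0; Negz 348; Posz 0; Negz 264; Posz 0; Negz 133; Posz 0; Negz 167; Posz 0; Negz 76; Posz 0; Posz 164; Posz 0; Negz 150; Posz 0; Negz 341; Posz 0; Negz 156; Posz 0; Negz 80; Posz 0; Negz 114; Posz 0; Negz 158; Posz 0; Negz 74; Posz 0; Posz 68; Posz 0; Posz 111; Posz 0; Negz 47; Posz 0; Negz 27; Posz 0; Negz 23; Posz 0; Negz 183; Posz 0; Negz 107; Posz 0; Posz 16; Posz 0; Posz 20];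
  [:: ];
  [:: Posz 0; Posz 0; Posz 0; Posz 0; Posz 0; Posz 5; Posz 0; Posz 5; Posz 0; Negz 24; Posz 0; Negz 49; Posz 0; Negz 9; Posz 0; Negz 5; Posz 0; Negz 36; Posz 0; Negz 62; Posz 0; Negz 120; Posz 0; Negz 129; Posz 0; Negz 52; Posz 0; Negz 54; Posz 0; Negz 65; Posz 0; Negz 2; Posz 0; Posz 2; Posz 0; Negz 24; Posz 0; Negz 48; Posz 0; Posz 18; Posz 0; Posz 22; Posz 0; Negz 55; Posz 0; Negz 103; Posz 0; Negz 107; Posz 0; Negz 103; Posz 0; Negz 133; Posz 0; Negz 142; Posz 0; Negz 133; Posz 0; Negz 121; Posz 0; Negz 164; Posz 0; Negz 169; Posz 0; Negz 122; Posz 0; Posz 6; Posz 0; Negz 1; Posz 0; Negz 118; Posz 0; Negz 44; Posz 0; Posz 17; Posz 0; Posz 22; Posz 0; Negz 24; Posz 0; Negz 13; Posz 0; Negz 11; Posz 0; Negz 91; Posz 0; Negz 53; Posz 0; Posz 8; Posz 0; Posz 10];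
  [:: ];
  [:: Posz 0; Posz 0; Posz 0; Posz 0; Posz 0; Posz 5; Posz 0; Posz 5; Posz 0; Negz 24; Posz 0; Negz 49; Posz 0; Negz 9; Posz 0; Negz 5; Posz 0; Negz 36; Posz 0; Negz 62; Posz 0; Negz 120; Posz 0; Negz 129; Posz 0; Negz 52; Posz 0; Negz 54; Posz 0; Negz 65; Posz 0; Negz 2; Posz 0; Posz 2; Posz 0; Negz 24; Posz 0; Negz 48; Posz 0; Posz 18; Posz 0; Posz 22; Posz 0; Negz 55; Posz 0; Negz 103; Posz 0; Negz 107; Posz 0; Negz 103; Posz 0; Negz 133; Posz 0; Negz 142; Posz 0; Negz 133; Posz 0; Negz 121; Posz 0; Negz 164; Posz 0; Negz 169; Posz 0; Negz 122; Posz 0; Posz 6; Posz 0; Negz 1; Posz 0; Negz 118; Posz 0; Negz 44; Posz 0; Posz 17; Posz 0; Posz 22; Posz 0; Negz 24; Posz 0; Negz 13; Posz 0; Negz 11; Posz 0; Negz 91; Posz 0; Negz 53; Posz 0; Posz 8; Posz 0; Posz 10];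
  [:: ];
  [:: Posz 0; Posz 0; Posz 0; Negz 0; Posz 0; Negz 25; Posz 0; Negz 10; Posz 0; Negz 2; Posz 0; Negz 28; Posz 0; Posz 18; Posz 0; Posz 18; Posz 0; Negz 28; Posz 0; Negz 27; Posz 0; Negz 30; Posz 0; Negz 45; Posz 0; Negz 51; Posz 0; Negz 50; Posz 0; Negz 39; Posz 0; Negz 11; Posz 0; Negz 55; Posz 0; Negz 67; Posz 0; Negz 17; Posz 0; Negz 23; Posz 0; Negz 27; Posz 0; Negz 10; Posz 0; Posz 11; Posz 0; Posz 54; Posz 0; Posz 89; Posz 0; Posz 28; Posz 0; Posz 37; Posz 0; Posz 29; Posz 0; Negz 53; Posz 0; Posz 13; Posz 0; Posz 79; Posz 0; Posz 57; Posz 0; Posz 6; Posz 0; Posz 10; Posz 0; Posz 40; Posz 0; Posz 17; Posz 0; Negz 22; Posz 0; Negz 42; Posz 0; Posz 24; Posz 0; Posz 14; Posz 0; Posz 12; Posz 0; Posz 92; Posz 0; Posz 54; Posz 0; Negz 7; Posz 0; Negz 9];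
  [:: ];
  [:: Posz 0; Posz 0; Posz 0; Negz 0; Posz 0; Negz 25; Posz 0; Negz 10; Posz 0; Negz 2; Posz 0; Negz 28; Posz 0; Posz 18; Posz 0; Posz 18; Posz 0; Negz 28; Posz 0; Negz 27; Posz 0; Negz 30; Posz 0; Negz 45; Posz 0; Negz 51; Posz 0; Negz 50; Posz 0; Negz 39; Posz 0; Negz 11; Posz 0; Negz 55; Posz 0; Negz 67; Posz 0; Negz 17; Posz 0; Negz 23; Posz 0; Negz 27; Posz 0; Negz 10; Posz 0; Posz 11; Posz 0; Posz 54; Posz 0; Posz 89; Posz 0; Posz 28; Posz 0; Posz 37; Posz 0; Posz 29; Posz 0; Negz 53; Posz 0; Posz 13; Posz 0; Posz 79; Posz 0; Posz 57; Posz 0; Posz 6; Posz 0; Posz 10; Posz 0; Posz 40; Posz 0; Posz 17; Posz 0; Negz 22; Posz 0; Negz 42; Posz 0; Posz 24; Posz 0; Posz 14; Posz 0; Posz 12; Posz 0; Posz 92; Posz 0; Posz 54; Posz 0; Negz 7; Posz 0; Negz 9];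
  [:: ];
  [:: Posz 0; Posz 0; Posz 0; Posz 0; Posz 0; Posz 15; Posz 0; Posz 12; Posz 0; Posz 9; Posz 0; Posz 21; Posz 0; Negz 74; Posz 0; Negz 56; Posz 0; Posz 31; Posz 0; Negz 57; Posz 0; Posz 117; Posz 0; Posz 316; Posz 0; Posz 87; Posz 0; Posz 16; Posz 0; Posz 54; Posz 0; Negz 80; Posz 0; Negz 244; Posz 0; Negz 185; Posz 0; Posz 6; Posz 0; Negz 196; Posz 0; Negz 308; Posz 0; Negz 148; Posz 0; Posz 141; Posz 0; Posz 79; Posz 0; Negz 229; Posz 0; Negz 147; Posz 0; Negz 41; Posz 0; Negz 75; Posz 0; Negz 115; Posz 0; Posz 127; Posz 0; Posz 195; Posz 0; Negz 4; Posz 0; Negz 314; Posz 0; Negz 220; Posz 0; Posz 120; Posz 0; Negz 80; Posz 0; Negz 193; Posz 0; Negz 83; Posz 0; Posz 63; Posz 0; Posz 28; Posz 0; Posz 24; Posz 0; Posz 184; Posz 0; Posz 108; Posz 0; Negz 15; Posz 0; Negz 19];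
  [:: ];
  [:: Posz 0; Posz 0; Posz 0; Posz 15; Posz 0; Posz 12; Posz 0; Negz 137; Posz 0; Negz 164; Posz 0; Negz 59; Posz 0; Negz 260; Posz 0; Negz 338; Posz 0; Negz 192; Posz 0; Negz 88; Posz 0; Negz 140; Posz 0; Negz 267; Posz 0; Negz 239; Posz 0; Negz 225; Posz 0; Negz 335; Posz 0; Negz 413; Posz 0; Negz 24; Posz 0; Posz 69; Posz 0; Negz 224; Posz 0; Negz 216; Posz 0; Negz 104; Posz 0; Negz 69; Posz 0; Negz 257; Posz 0; Negz 348; Posz 0; Negz 264; Posz 0; Negz 133; Posz 0; Negz 167; Posz 0; Negz 76; Posz 0; Posz 164; Posz 0; Negz 150; Posz 0; Negz 341; Posz 0; Negz 156; Posz 0; Negz 80; Posz 0; Negz 114; Posz 0; Negz 158; Posz 0; Negz 74; Posz 0; Posz 68; Posz 0; Posz 111; Posz 0; Negz 47; Posz 0; Negz 27; Posz 0; Negz 23; Posz 0; Negz 183; Posz 0; Negz 107; Posz 0; Posz 16; Posz 0; Posz 20];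
  [:: ];
  [:: Posz 0; Posz 0; Posz 0; Negz 0; Posz 0; Negz 25; Posz 0; Negz 10; Posz 0; Negz 2; Posz 0; Negz 28; Posz 0; Posz 18; Posz 0; Posz 18; Posz 0; Negz 28; Posz 0; Negz 27; Posz 0; Negz 30; Posz 0; Negz 45; Posz 0; Negz 51; Posz 0; Negz 50; Posz 0; Negz 39; Posz 0; Negz 11; Posz 0; Negz 55; Posz 0; Negz 67; Posz 0; Negz 17; Posz 0; Negz 23; Posz 0; Negz 27; Posz 0; Negz 10; Posz 0; Posz 11; Posz 0; Posz 54; Posz 0; Posz 89; Posz 0; Posz 28; Posz 0; Posz 37; Posz 0; Posz 29; Posz 0; Negz 53; Posz 0; Posz 13; Posz 0; Posz 79; Posz 0; Posz 57; Posz 0; Posz 6; Posz 0; Posz 10; Posz 0; Posz 40; Posz 0; Posz 17; Posz 0; Negz 22; Posz 0; Negz 42; Posz 0; Posz 24; Posz 0; Posz 14; Posz 0; Posz 12; Posz 0; Posz 92; Posz 0; Posz 54; Posz 0; Negz 7; Posz 0; Negz 9];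
  [:: ];
  [:: Posz 0; Posz 0; Posz 0; Posz 15; Posz 0; Posz 12; Posz 0; Negz 137; Posz 0; Negz 164; Posz 0; Negz 59; Posz 0; Negz 260; Posz 0; Negz 338; Posz 0; Negz 192; Posz 0; Negz 88; Posz 0; Negz 140; Posz 0; Negz 267; Posz 0; Negz 239; Posz 0; Negz 225; Posz 0; Negz 335; Posz 0; Negz 413; Posz 0; Negz 24; Posz 0; Posz 69; Posz 0; Negz 224; Posz 0; Negz 216; Posz 0; Negz 104; Posz 0; Negz 69; Posz 0; Negz 257; Posz 0; Negz 348; Posz 0; Negz 264; Posz 0; Negz 133; Posz 0; Negz 167; Posz 0; Negz 76; Posz 0; Posz 164; Posz 0; Negz 150; Posz 0; Negz 341; Posz 0; Negz 156; Posz 0; Negz 80; Posz 0; Negz 114; Posz 0; Negz 158; Posz 0; Negz 74; Posz 0; Posz 68; Posz 0; Posz 111; Posz 0; Negz 47; Posz 0; Negz 27; Posz 0; Negz 23; Posz 0; Negz 183; Posz 0; Negz 107; Posz 0; Posz 16; Posz 0; Posz 20];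
  [:: ];
  [:: ];
  [:: ];
  [:: Posz 0; Posz 0; Posz 0; Posz 0; Posz 0; Posz 15; Posz 0; Posz 12; Posz 0; Posz 9; Posz 0; Posz 21; Posz 0; Negz 74; Posz 0; Negz 56; Posz 0; Posz 31; Posz 0; Negz 57; Posz 0; Posz 117; Posz 0; Posz 316; Posz 0; Posz 87; Posz 0; Posz 16; Posz 0; Posz 54; Posz 0; Negz 80; Posz 0; Negz 244; Posz 0; Negz 185; Posz 0; Posz 6; Posz 0; Negz 196; Posz 0; Negz 308; Posz 0; Negz 148; Posz 0; Posz 141; Posz 0; Posz 79; Posz 0; Negz 229; Posz 0; Negz 147; Posz 0; Negz 41; Posz 0; Negz 75; Posz 0; Negz 115; Posz 0; Posz 127; Posz 0; Posz 195; Posz 0; Negz 4; Posz 0; Negz 314; Posz 0; Negz 220; Posz 0; Posz 120; Posz 0; Negz 80; Posz 0; Negz 193; Posz 0; Negz 83; Posz 0; Posz 63; Posz 0; Posz 28; Posz 0; Posz 24; Posz 0; Posz 184; Posz 0; Posz 108; Posz 0; Negz 15; Posz 0; Negz 19];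
  [:: ];
  [:: Posz 0; Posz 0; Posz 0; Posz 0; Posz 0; Posz 5; Posz 0; Posz 5; Posz 0; Negz 24; Posz 0; Negz 49; Posz 0; Negz 9; Posz 0; Negz 5; Posz 0; Negz 36; Posz 0; Negz 62; Posz 0; Negz 120; Posz 0; Negz 129; Posz 0; Negz 52; Posz 0; Negz 54; Posz 0; Negz 65; Posz 0; Negz 2; Posz 0; Posz 2; Posz 0; Negz 24; Posz 0; Negz 48; Posz 0; Posz 18; Posz 0; Posz 22; Posz 0; Negz 55; Posz 0; Negz 103; Posz 0; Negz 107; Posz 0; Negz 103; Posz 0; Negz 133; Posz 0; Negz 142; Posz 0; Negz 133; Posz 0; Negz 121; Posz 0; Negz 164; Posz 0; Negz 169; Posz 0; Negz 122; Posz 0; Posz 6; Posz 0; Negz 1; Posz 0; Negz 118; Posz 0; Negz 44; Posz 0; Posz 17; Posz 0; Posz 22; Posz 0; Negz 24; Posz 0; Negz 13; Posz 0; Negz 11; Posz 0; Negz 91; Posz 0; Negz 53; Posz 0; Posz 8; Posz 0; Posz 10];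
  [:: ];
  [:: Posz 0; Posz 0; Posz 0; Posz 0; Posz 0; Posz 15; Posz 0; Posz 12; Posz 0; Posz 9; Posz 0; Posz 21; Posz 0; Negz 74; Posz 0; Negz 56; Posz 0; Posz 31; Posz 0; Negz 57; Posz 0; Posz 117; Posz 0; Posz 316; Posz 0; Posz 87; Posz 0; Posz 16; Posz 0; Posz 54; Posz 0; Negz 80; Posz 0; Negz 244; Posz 0; Negz 185; Posz 0; Posz 6; Posz 0; Negz 196; Posz 0; Negz 308; Posz 0; Negz 148; Posz 0; Posz 141; Posz 0; Posz 79; Posz 0; Negz 229; Posz 0; Negz 147; Posz 0; Negz 41; Posz 0; Negz 75; Posz 0; Negz 115; Posz 0; Posz 127; Posz 0; Posz 195; Posz 0; Negz 4; Posz 0; Negz 314; Posz 0; Negz 220; Posz 0; Posz 120; Posz 0; Negz 80; Posz 0; Negz 193; Posz 0; Negz 83; Posz 0; Posz 63; Posz 0; Posz 28; Posz 0; Posz 24; Posz 0; Posz 184; Posz 0; Posz 108; Posz 0; Negz 15; Posz 0; Negz 19];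
  [:: ];
  [:: Posz 0; Posz 0; Posz 0; Posz 15; Posz 0; Posz 12; Posz 0; Negz 137; Posz 0; Negz 164; Posz 0; Negz 59; Posz 0; Negz 260; Posz 0; Negz 338; Posz 0; Negz 192; Posz 0; Negz 88; Posz 0; Negz 140; Posz 0; Negz 267; Posz 0; Negz 239; Posz 0; Negz 225; Posz 0; Negz 335; Posz 0; Negz 413; Posz 0; Negz 24; Posz 0; Posz 69; Posz 0; Negz 224; Posz 0; Negz 216; Posz 0; Negz 104; Posz 0; Negz 69; Posz 0; Negz 257; Posz 0; Negz 348; Posz 0; Negz 264; Posz 0; Negz 133; Posz 0; Negz 167; Posz 0; Negz 76; Posz 0; Posz 164; Posz 0; Negz 150; Posz 0; Negz 341; Posz 0; Negz 156; Posz 0; Negz 80; Posz 0; Negz 114; Posz 0; Negz 158; Posz 0; Negz 74; Posz 0; Posz 68; Posz 0; Posz 111; Posz 0; Negz 47; Posz 0; Negz 27; Posz 0; Negz 23; Posz 0; Negz 183; Posz 0; Negz 107; Posz 0; Posz 16; Posz 0; Posz 20];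
  [:: ];
  [:: Posz 0; Posz 0; Posz 0; Posz 0; Posz 0; Posz 5; Posz 0; Posz 5; Posz 0; Negz 24; Posz 0; Negz 49; Posz 0; Negz 9; Posz 0; Negz 5; Posz 0; Negz 36; Posz 0; Negz 62; Posz 0; Negz 120; Posz 0; Negz 129; Posz 0; Negz 52; Posz 0; Negz 54; Posz 0; Negz 65; Posz 0; Negz 2; Posz 0; Posz 2; Posz 0; Negz 24; Posz 0; Negz 48; Posz 0; Posz 18; Posz 0; Posz 22; Posz 0; Negz 55; Posz 0; Negz 103; Posz 0; Negz 107; Posz 0; Negz 103; Posz 0; Negz 133; Posz 0; Negz 142; Posz 0; Negz 133; Posz 0; Negz 121; Posz 0; Negz 164; Posz 0; Negz 169; Posz 0; Negz 122; Posz 0; Posz 6; Posz 0; Negz 1; Posz 0; Negz 118; Posz 0; Negz 44; Posz 0; Posz 17; Posz 0; Posz 22; Posz 0; Negz 24; Posz 0; Negz 13; Posz 0; Negz 11; Posz 0; Negz 91; Posz 0; Negz 53; Posz 0; Posz 8; Posz 0; Posz 10];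
  [:: ];
  [:: Posz 0; Posz 0; Posz 0; Posz 0; Posz 0; Posz 5; Posz 0; Posz 5; Posz 0; Negz 24; Posz 0; Negz 49; Posz 0; Negz 9; Posz 0; Negz 5; Posz 0; Negz 36; Posz 0; Negz 62; Posz 0; Negz 120; Posz 0; Negz 129; Posz 0; Negz 52; Posz 0; Negz 54; Posz 0; Negz 65; Posz 0; Negz 2; Posz 0; Posz 2; Posz 0; Negz 24; Posz 0; Negz 48; Posz 0; Posz 18; Posz 0; Posz 22; Posz 0; Negz 55; Posz 0; Negz 103; Posz 0; Negz 107; Posz 0; Negz 103; Posz 0; Negz 133; Posz 0; Negz 142; Posz 0; Negz 133; Posz 0; Negz 121; Posz 0; Negz 164; Posz 0; Negz 169; Posz 0; Negz 122; Posz 0; Posz 6; Posz 0; Negz 1; Posz 0; Negz 118; Posz 0; Negz 44; Posz 0; Posz 17; Posz 0; Posz 22; Posz 0; Negz 24; Posz 0; Negz 13; Posz 0; Negz 11; Posz 0; Negz 91; Posz 0; Negz 53; Posz 0; Posz 8; Posz 0; Posz 10]].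
Definition Phi17 : seq int := [:: Posz 1; Posz 1; Posz 1; Posz 1; Posz 1; Posz 1; Posz 1; Posz 1; Posz 1; Posz 1; Posz 1; Posz 1; Posz 1; Posz 1; Posz 1; Posz 1; Posz 1].
Definition U17 : seq int := [:: Posz 0; Posz 4; Posz 4; Negz 3; Posz 4; Negz 3; Negz 3; Negz 3; Posz 4; Posz 4; Negz 3; Negz 3; Negz 3; Posz 4; Negz 3; Posz 4; Posz 4].
Definition W17 : seq int := [:: Posz 5; Posz 8; Posz 2; Posz 10; Posz 8; Posz 10; Posz 0; Posz 0; Posz 2; Posz 2; Posz 0; Posz 0; Posz 10; Posz 8; Posz 10; Posz 2; Posz 8].
Definition Wt17 : seq int := [:: Posz 5; Posz 0; Posz 10; Posz 8; Posz 0; Posz 8; Posz 2; Posz 2; Posz 10; Posz 10; Posz 2; Posz 2; Posz 8; Posz 0; Posz 8; Posz 10].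
Definition Qs17 : seq (seq int) := [:: [:: ];
  [:: ];
  [:: Negz 99; Negz 79; Negz 119; Negz 179; Negz 79; Negz 179; Negz 19; Negz 19; Negz 119; Negz 119; Negz 19; Negz 19; Negz 179; Negz 79; Negz 179; Negz 119; Negz 79];
  [:: Posz 150; Posz 120; Posz 44; Posz 848; Negz 355; Posz 440; Posz 404; Negz 411; Posz 248; Negz 91; Negz 71; Negz 411; Posz 984; Posz 120; Negz 35; Posz 588; Negz 15];
  [:: ];
  [:: Posz 150; Posz 120; Posz 44; Posz 848; Negz 355; Posz 440; Posz 404; Negz 411; Posz 248; Negz 91; Negz 71; Negz 411; Posz 984; Posz 120; Negz 35; Posz 588; Negz 15];
  [:: Negz 249; Negz 199; Negz 163; Negz 1027; Posz 276; Negz 619; Negz 423; Posz 392; Negz 367; Negz 27; Posz 52; Posz 392; Negz 1163; Negz 199; Negz 143; Negz 707; Negz 63];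
  [:: Negz 249; Negz 199; Negz 163; Negz 1027; Posz 276; Negz 619; Negz 423; Posz 392; Negz 367; Negz 27; Posz 52; Posz 392; Negz 1163; Negz 199; Negz 143; Negz 707; Negz 63];
  [:: Negz 99; Negz 79; Negz 119; Negz 179; Negz 79; Negz 179; Negz 19; Negz 19; Negz 119; Negz 119; Negz 19; Negz 19; Negz 179; Negz 79; Negz 179; Negz 119; Negz 79];
  [:: Negz 99; Negz 79; Negz 119; Negz 179; Negz 79; Negz 179; Negz 19; Negz 19; Negz 119; Negz 119; Negz 19; Negz 19; Negz 179; Negz 79; Negz 179; Negz 119; Negz 79];
  [:: Negz 249; Negz 199; Negz 163; Negz 1027; Posz 276; Negz 619; Negz 423; Posz 392; Negz 367; Negz 27; Posz 52; Posz 392; Negz 1163; Negz 199; Negz 143; Negz 707; Negz 63];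
  [:: Negz 249; Negz 199; Negz 163; Negz 1027; Posz 276; Negz 619; Negz 423; Posz 392; Negz 367; Negz 27; Posz 52; Posz 392; Negz 1163; Negz 199; Negz 143; Negz 707; Negz 63];
  [:: Posz 150; Posz 120; Posz 44; Posz 848; Negz 355; Posz 440; Posz 404; Negz 411; Posz 248; Negz 91; Negz 71; Negz 411; Posz 984; Posz 120; Negz 35; Posz 588; Negz 15];
  [:: ];
  [:: Posz 150; Posz 120; Posz 44; Posz 848; Negz 355; Posz 440; Posz 404; Negz 411; Posz 248; Negz 91; Negz 71; Negz 411; Posz 984; Posz 120; Negz 35; Posz 588; Negz 15];
  [:: Negz 99; Negz 79; Negz 119; Negz 179; Negz 79; Negz 179; Negz 19; Negz 19; Negz 119; Negz 119; Negz 19; Negz 19; Negz 179; Negz 79; Negz 179; Negz 119; Negz 79];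
  [:: ]].
Definition QU20 : seq int := [:: Negz 399; Posz 0; Negz 399; Posz 0; Posz 0; Posz 0; Posz 0; Posz 0; Posz 80; Posz 0; Posz 480; Posz 0; Posz 240; Posz 0; Negz 159; Posz 0; Negz 79; Posz 0; Negz 159; Posz 0; Negz 159; Posz 0; Posz 80; Posz 0; Posz 80].
Definition QW20 : seq int := [:: Negz 124; Posz 0; Negz 79; Posz 0; Posz 25; Posz 0; Negz 14; Posz 0; Posz 55; Posz 0; Posz 175; Posz 0; Posz 130; Posz 0; Posz 25; Posz 0; Negz 34; Posz 0; Negz 74; Posz 0; Negz 44; Posz 0; Posz 0; Posz 0; Posz 5; Posz 0; Posz 35; Posz 0; Posz 75; Posz 0; Posz 45].
Definition QWt20 : seq int := [:: Negz 124; Posz 0; Negz 124; Posz 0; Posz 50; Posz 0; Posz 95; Posz 0; Negz 4; Posz 0; Posz 75; Posz 0; Posz 105; Posz 0; Negz 39; Posz 0; Negz 14; Posz 0; Posz 60; Posz 0; Posz 30; Posz 0; Posz 0; Posz 0; Posz 45; Posz 0; Posz 45].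
Definition QU52 : seq int := [:: Negz 2703; Posz 0; Negz 2703; Posz 0; Posz 0; Posz 0; Posz 0; Posz 0; Posz 208; Posz 0; Posz 208; Posz 0; Negz 415; Posz 0; Negz 415; Posz 0; Posz 624; Posz 0; Posz 624; Posz 0; Posz 0; Posz 0; Posz 0; Posz 0; Negz 623; Posz 0; Posz 2080; Posz 0; Posz 3120; Posz 0; Posz 416; Posz 0; Negz 207; Posz 0; Negz 415; Posz 0; Negz 1039; Posz 0; Negz 415; Posz 0; Posz 624; Posz 0; Negz 415; Posz 0; Negz 1039; Posz 0; Negz 415; Posz 0; Negz 207; Posz 0; Posz 416; Posz 0; Posz 416; Posz 0; Negz 623; Posz 0; Negz 623; Posz 0; Posz 0; Posz 0; Posz 0; Posz 0; Posz 624; Posz 0; Posz 624; Posz 0; Negz 415; Posz 0; Negz 415; Posz 0; Posz 208; Posz 0; Posz 208].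
Definition QW52 : seq int := [:: Negz 2196; Posz 0; Negz 2183; Posz 0; Negz 324; Posz 0; Negz 467; Posz 0; Posz 78; Posz 0; Posz 559; Posz 0; Posz 533; Posz 0; Posz 377; Posz 0; Posz 377; Posz 0; Posz 845; Posz 0; Posz 871; Posz 0; Posz 533; Posz 0; Posz 689; Posz 0; Posz 2561; Posz 0; Posz 2392; Posz 0; Posz 429; Posz 0; Posz 728; Posz 0; Posz 26; Posz 0; Negz 1286; Posz 0; Negz 974; Posz 0; Negz 818; Posz 0; Negz 974; Posz 0; Negz 610; Posz 0; Posz 26; Posz 0; Posz 52; Posz 0; Negz 246; Posz 0; Negz 142; Posz 0; Posz 26; Posz 0; Posz 351; Posz 0; Posz 195; Posz 0; Posz 533; Posz 0; Posz 1183; Posz 0; Posz 715; Posz 0; Posz 715; Posz 0; Posz 871; Posz 0; Posz 221; Posz 0; Negz 259; Posz 0; Negz 129; Posz 0; Posz 13; Posz 0; Posz 13].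
Definition QWt52 : seq int := [:: Negz 2196; Posz 0; Negz 2196; Posz 0; Posz 338; Posz 0; Posz 663; Posz 0; Negz 142; Posz 0; Negz 584; Posz 0; Posz 247; Posz 0; Posz 247; Posz 0; Posz 247; Posz 0; Posz 390; Posz 0; Posz 338; Posz 0; Posz 195; Posz 0; Negz 584; Posz 0; Posz 1729; Posz 0; Posz 2379; Posz 0; Posz 364; Posz 0; Negz 740; Posz 0; Negz 259; Posz 0; Posz 988; Posz 0; Posz 481; Posz 0; Posz 481; Posz 0; Posz 481; Posz 0; Posz 312; Posz 0; Negz 259; Posz 0; Negz 64; Posz 0; Posz 1040; Posz 0; Posz 520; Posz 0; Negz 129; Posz 0; Negz 246; Posz 0; Posz 533; Posz 0; Posz 676; Posz 0; Posz 52; Posz 0; Negz 90; Posz 0; Negz 90; Posz 0; Negz 90; Posz 0; Negz 246; Posz 0; Posz 195; Posz 0; Posz 325].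
Definition QU17 : seq int := [:: Negz 4623; Posz 4624; Posz 272; Posz 272; Negz 815; Posz 272; Posz 272; Negz 1903; Posz 1360; Posz 272; Posz 1360; Negz 1903; Posz 272; Posz 272; Negz 815; Posz 272; Posz 272].
Definition QW17 : seq int := [:: Negz 4487; Posz 4692; Posz 68; Posz 3128; Negz 407; Posz 2720; Posz 408; Negz 1563; Negz 883; Negz 1223; Posz 1088; Negz 1563; Posz 2108; Posz 68; Posz 2244; Negz 543; Posz 1088].
Definition QWt17 : seq int := [:: Negz 4487; Posz 5644; Posz 1700; Negz 2651; Posz 2652; Posz 68; Negz 2651; Posz 1632; Posz 3808; Negz 1631; Posz 136; Posz 1632; Negz 1631; Posz 1020; Posz 1700].

Section Helpers.
Variable L : fieldType.

Lemma hlp_u (U : seq int) (e m : nat) Q Phi (z : L) :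
  pzero (padd (padd (pscale (m%:Z) (pmul U U)) (mono 0 (- (16 * (e%:Z) ^+ 2)))) (pscale (-1) (pmul Q Phi))) ->
  ev Phi z = 0 -> e%:R != 0 :> L -> (ev U z / e%:R) ^+ 2 * m%:R = 16.
Proof.
move=> H HP e0; have := @ev_chk _ _ _ _ z H HP.
rewrite !ev_padd ev_pscale ev_pmul ev_mono expr0 mulr1 rmorphN rmorphM rmorphXn /= -!pmulrn.
move=> E; apply/eqP; rewrite -subr_eq0; apply/eqP.
rewrite -[RHS](mulr0 (e%:R ^- 2)) -E; field; exact: e0.
Qed.

Lemma hlp_w (U W : seq int) (e d : nat) (s : int) Q Phi (z : L) :
  pzero (padd (padd (pscale (e%:Z) (pmul W W)) (pscale (- (d%:Z ^+ 2)) (padd (mono 0 e%:Z) (pscale s U))))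
     (pscale (-1) (pmul Q Phi))) ->
  ev Phi z = 0 -> e%:R != 0 :> L -> ev W z ^+ 2 = d%:R ^+ 2 * (1 + s%:~R * (ev U z / e%:R)).
Proof.
move=> H HP e0; have := @ev_chk _ _ _ _ z H HP.
rewrite !ev_padd !ev_pscale ev_pmul ev_padd ev_mono expr0 mulr1 ev_pscale rmorphN rmorphXn /= -!pmulrn.
move=> E; apply/eqP; rewrite -subr_eq0; apply/eqP.
rewrite -[RHS](mulr0 (e%:R ^-1)) -E; field; exact: e0.
Qed.

Lemma phi_root (K Phi T : seq int) (z : L) :
  pzero (padd (pmul K Phi) (pscale (-1) T)) -> ev T z = 0 -> ev K z != 0 -> ev Phi z = 0.
Proof.
move=> H HT K0; have := ev_pzero _ _ z H; rewrite ev_padd ev_pscale ev_pmul HT mulr0 addr0.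
by move/eqP; rewrite mulf_eq0 (negbTE K0) => /eqP.
Qed.
End Helpers.

Section Cases.
Variable L : fieldType.
Variable p : nat.
Hypothesis pc : p \in [pchar L].
Hypothesis hodd : odd p.
Let hp : prime p := pcharf_prime pc.
Let h := ((p.-1)./2)%N.
Let hh : (h.*2.+1 = p)%N. Proof. by case: (half_fact _ hodd). Qed.

Lemma ndvd_of (n : nat) : (0 < n)%N -> all (fun q => q != p) (primes n) -> n%:R != 0 :> L.
Proof.
move=> n0 H; rewrite -(dvdn_pcharf pc); apply/negP => d.
have : p \in primes n by rewrite mem_primes hp n0 d.
by move/allP: H => H /H; rewrite eqxx.
Qed.

Lemma p_neq2 : (2 != p)%N.
Proof. by apply/eqP => p2; move: hodd; rewrite -p2. Qed.

Lemma cop_of (N : nat) : (0 < N)%N -> all (fun q => q != p) (primes N) -> coprime (p %% N) N.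
Proof.
move=> N0 H; rewrite coprime_modl prime_coprime //; apply/negP => d.
have : p \in primes N by rewrite mem_primes hp N0 d.
by move/allP: H => H /H; rewrite eqxx.
Qed.

Definition tab5 (x : nat) : int * int :=
  if x == 1%N then (2, 1) else if x == 4%N then (-2, 1) else if x == 3%N then (4, 1) else (-4, 1).
Definition tab20 (r : nat) := tab5 (r %% 5).

Lemma chk20 : chk_all 20 Phi20 (mono 5 1) W20 Wt20 tab20 Qs20.
Proof. by vm_compute. Qed.

Lemma case20 (p5 : p != 5%N) (z : L) (hz : 20.-primitive_root z) :
  (-1) ^+ h * (\sum_(k < (p %/ 4).+1) ('C(4 * k, 2 * k))%:R / (20%:R) ^+ k) =
  ((tab5 (p %% 5)%N).1)%:~R / (2 * ((tab5 (p %% 5)%N).2)%:~R) :> L.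
Proof.
have z20 : z ^+ 20 = 1 := prim_expr_order hz.
have z10 : z ^+ 10 = -1.
  have : (z ^+ 10) ^+ 2 == 1 by rewrite -exprM z20.
  by rewrite sqrf_eq1 => /orP[|/eqP //]; rewrite -(prim_order_dvd hz).
have pr20 : primes 20 = [:: 2; 5]%N by vm_compute.
have pr5 : primes 5 = [:: 5]%N by vm_compute.
have pr4 : primes 4 = [:: 2]%N by vm_compute.
have hPhi : ev Phi20 z = 0.
  apply: (@phi_root _ [:: 1; 0; 1] _ (padd (mono 0 1) (mono 10 1))).
  - by vm_compute.
  - by rewrite ev_padd !ev_mono expr0 z10 !mulr1z mulr1 mulrN1 subrr.
  - rewrite /= !mulr1z mulr0z !mulr0 !addr0 add0r mulr1; apply/negP => /eqP z2.
    have zz : z ^+ 2 = -1 by rewrite expr2; apply/eqP; rewrite -addr_eq0 addrC z2.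
    have : z ^+ 4 == 1 by rewrite (exprM z 2 2) zz sqrrN expr1n.
    by rewrite -(prim_order_dvd hz).
have cop : coprime (p %% 20) 20 by rewrite cop_of // pr20 /= p_neq2 eq_sym p5.
have e5 : 5%:R != 0 :> L by rewrite ndvd_of // pr5 /= eq_sym p5.
have e20 : 20%:R != 0 :> L by rewrite ndvd_of // pr20 /= p_neq2 eq_sym p5.
have e16 : 20%:R != 16 :> L.
  by rewrite -subr_eq0 -natrB // ndvd_of // pr4 /= p_neq2.
have hI : ev (mono 5 1) z ^+ p = (-1) ^+ h * ev (mono 5 1) z.
  by rewrite ev_mono mulr1z mul1r -hh exprS -mul2n exprM -(exprM z 5 2) z10 mulrC.
have hu := @hlp_u L U20 5 20 QU20 Phi20 z ltac:(by vm_compute) hPhi e5.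
have hW := @hlp_w L U20 W20 5 5 1 QW20 Phi20 z ltac:(by vm_compute) hPhi e5.
have hWt := @hlp_w L U20 Wt20 5 5 (-1) QWt20 Phi20 z ltac:(by vm_compute) hPhi e5.
rewrite mulr1z mul1r in hW; rewrite mulrN1z mulN1r in hWt.
have z0 : z != 0 by apply/negP => /eqP z0; move: z20; rewrite z0 expr0n /= => /eqP; rewrite eq_sym oner_eq0.
have I0 : ev (mono 5 1) z != 0 by rewrite ev_mono mulr1z mul1r expf_neq0.
have B1 : forall x, (tab5 x).2 = 1 by move=> x; rewrite /tab5; repeat case: ifP.
have B0 : ((tab20 (p %% 20)).2)%:~R != 0 :> L by rewrite /tab20 B1 mulr1z oner_eq0.
have := @gen L p pc hodd 20 z Phi20 (mono 5 1) W20 Wt20 U20 5 5 20 ((-1) ^+ h) tab20 Qs20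
  isT z20 hPhi chk20 cop hu hW hWt e5 e20 e16 hI I0 B0.
by rewrite /tab20 (@modn_dvdm 20 p 5).
Qed.
Definition tab13 (x : nat) : int * int :=
  if x \in [:: 1; 3; 9]%N then (2, 1) else if x \in [:: 12; 10; 4]%N then (-2, 1)
  else if x \in [:: 2; 5; 6]%N then (4, 3) else (-4, 3).
Definition tab52 (r : nat) := tab13 (r %% 13).

Lemma chk52 : chk_all 52 Phi52 (mono 13 1) W52 Wt52 tab52 Qs52.
Proof. by vm_compute. Qed.

Lemma case52 (p13 : p != 13%N) (p3 : p != 3%N) (z : L) (hz : 52.-primitive_root z) :
  (-1) ^+ h * (\sum_(k < (p %/ 4).+1) ('C(4 * k, 2 * k))%:R / (52%:R) ^+ k) =
  ((tab13 (p %% 13)%N).1)%:~R / (2 * ((tab13 (p %% 13)%N).2)%:~R) :> L.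
Proof.
have z52 : z ^+ 52 = 1 := prim_expr_order hz.
have z26 : z ^+ 26 = -1.
  have : (z ^+ 26) ^+ 2 == 1 by rewrite -exprM z52.
  by rewrite sqrf_eq1 => /orP[|/eqP //]; rewrite -(prim_order_dvd hz).
have pr52 : primes 52 = [:: 2; 13]%N by vm_compute.
have pr13 : primes 13 = [:: 13]%N by vm_compute.
have pr36 : primes 36 = [:: 2; 3]%N by vm_compute.
have pr3 : primes 3 = [:: 3]%N by vm_compute.
have hPhi : ev Phi52 z = 0.
  apply: (@phi_root _ [:: 1; 0; 1] _ (padd (mono 0 1) (mono 26 1))).
  - by vm_compute.
  - by rewrite ev_padd !ev_mono expr0 z26 !mulr1z mulr1 mulrN1 subrr.
  - rewrite /= !mulr1z mulr0z !mulr0 !addr0 add0r mulr1; apply/negP => /eqP z2.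
    have zz : z ^+ 2 = -1 by rewrite expr2; apply/eqP; rewrite -addr_eq0 addrC z2.
    have : z ^+ 4 == 1 by rewrite (exprM z 2 2) zz sqrrN expr1n.
    by rewrite -(prim_order_dvd hz).
have cop : coprime (p %% 52) 52 by rewrite cop_of // pr52 /= p_neq2 eq_sym p13.
have e13 : 13%:R != 0 :> L by rewrite ndvd_of // pr13 /= eq_sym p13.
have e52 : 52%:R != 0 :> L by rewrite ndvd_of // pr52 /= p_neq2 eq_sym p13.
have e16 : 52%:R != 16 :> L.
  by rewrite -subr_eq0 -natrB // ndvd_of // pr36 /= p_neq2 eq_sym p3.
have e3 : 3%:R != 0 :> L by rewrite ndvd_of // pr3 /= eq_sym p3.
have hI : ev (mono 13 1) z ^+ p = (-1) ^+ h * ev (mono 13 1) z.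
  by rewrite ev_mono mulr1z mul1r -hh exprS -mul2n exprM -(exprM z 13 2) z26 mulrC.
have hu := @hlp_u L U52 13 52 QU52 Phi52 z ltac:(by vm_compute) hPhi e13.
have hW := @hlp_w L U52 W52 13 13 1 QW52 Phi52 z ltac:(by vm_compute) hPhi e13.
have hWt := @hlp_w L U52 Wt52 13 13 (-1) QWt52 Phi52 z ltac:(by vm_compute) hPhi e13.
rewrite mulr1z mul1r in hW; rewrite mulrN1z mulN1r in hWt.
have z0 : z != 0 by apply/negP => /eqP z0; move: z52; rewrite z0 expr0n /= => /eqP; rewrite eq_sym oner_eq0.
have I0 : ev (mono 13 1) z != 0 by rewrite ev_mono mulr1z mul1r expf_neq0.
have B1 : forall x, ((tab13 x).2 = 1) \/ ((tab13 x).2 = 3).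
  by move=> x; rewrite /tab13; repeat case: ifP; auto.
have B0 : ((tab52 (p %% 52)).2)%:~R != 0 :> L.
  by rewrite /tab52; case: (B1 (p %% 52 %% 13)%N) => ->; rewrite ?mulr1z ?oner_eq0 // -pmulrn.
have := @gen L p pc hodd 52 z Phi52 (mono 13 1) W52 Wt52 U52 13 13 52 ((-1) ^+ h) tab52 Qs52
  isT z52 hPhi chk52 cop hu hW hWt e13 e52 e16 hI I0 B0.
by rewrite /tab52 (@modn_dvdm 52 p 13).
Qed.

Definition tab17 (x : nat) : int * int :=
  if x \in [:: 1; 16; 4; 13]%N then (2, 1) else if x \in [:: 2; 15; 8; 9]%N then (-2, 1)
  else if x \in [:: 3; 14; 5; 12]%N then (8, 1) else (-8, 1).

Lemma chk17 : chk_all 17 Phi17 (mono 0 1) W17 Wt17 tab17 Qs17.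
Proof. by vm_compute. Qed.

Lemma case17 (p17 : p != 17%N) (z : L) (hz : 17.-primitive_root z) :
  1 * (\sum_(k < (p %/ 4).+1) ('C(4 * k, 2 * k))%:R / (17%:R) ^+ k) =
  ((tab17 (p %% 17)%N).1)%:~R / (2 * ((tab17 (p %% 17)%N).2)%:~R) :> L.
Proof.
have z17 : z ^+ 17 = 1 := prim_expr_order hz.
have pr17 : primes 17 = [:: 17]%N by vm_compute.
have hPhi : ev Phi17 z = 0.
  apply: (@phi_root _ [:: -1; 1] _ (padd (mono 0 (-1)) (mono 17 1))).
  - by vm_compute.
  - by rewrite ev_padd !ev_mono expr0 z17 mulrN1z mulr1z !mulr1 addNr.
  - rewrite /= mulrN1z !mulr1z !mulr0 !addr0 mulr1; apply/negP => /eqP z1.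
    have : z ^+ 1 == 1 by rewrite expr1 -subr_eq0 addrC z1.
    by rewrite -(prim_order_dvd hz).
have cop : coprime (p %% 17) 17 by rewrite cop_of // pr17 /= eq_sym p17.
have e17 : 17%:R != 0 :> L by rewrite ndvd_of // pr17 /= eq_sym p17.
have e16 : 17%:R != 16 :> L.
  by rewrite -subr_eq0 -natrB // oner_eq0.
have hI : ev (mono 0 1) z ^+ p = 1 * ev (mono 0 1) z.
  by rewrite ev_mono mulr1z mul1r expr0 expr1n mul1r.
have hu := @hlp_u L U17 17 17 QU17 Phi17 z ltac:(by vm_compute) hPhi e17.
have hW := @hlp_w L U17 W17 17 17 1 QW17 Phi17 z ltac:(by vm_compute) hPhi e17.
have hWt := @hlp_w L U17 Wt17 17 17 (-1) QWt17 Phi17 z ltac:(by vm_compute) hPhi e17.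
rewrite mulr1z mul1r in hW; rewrite mulrN1z mulN1r in hWt.
have I0 : ev (mono 0 1) z != 0 by rewrite ev_mono mulr1z mul1r expr0 oner_eq0.
have B1 : forall x, (tab17 x).2 = 1 by move=> x; rewrite /tab17; repeat case: ifP.
have B0 : ((tab17 (p %% 17)).2)%:~R != 0 :> L by rewrite B1 mulr1z oner_eq0.
exact: (@gen L p pc hodd 17 z Phi17 (mono 0 1) W17 Wt17 U17 17 17 17 1 tab17 Qs17
  isT z17 hPhi chk17 cop hu hW hWt e17 e17 e16 hI I0 B0).
Qed.
End Cases.

Lemma exists_prim (p N : nat) : prime p -> (1 < N)%N -> coprime p N ->
  exists (F : finFieldType) (pc : p \in [pchar F]) (z : F), N.-primitive_root z.
Proof.
move=> hp N1 cop.
have N0 : (0 < N)%N by apply: ltnW.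
have k0 : (0 < totient N)%N by rewrite totient_gt0.
have [F pcF cardF] := pPrimePowerField hp k0.
exists F, pcF.
set q := (p ^ totient N)%N in cardF.
have q1 : (1 <= q)%N by rewrite expn_gt0 prime_gt0.
have Ndv : (N %| q.-1)%N.
  have := Euler_exp_totient cop; rewrite -/q (modn_small N1) => e.
  by rewrite -subn1 -(eqn_mod_dvd _ q1) e modn_small.
set rs := enum (predC1 (0 : F)).
have qg1 : (1 < q)%N by rewrite -[X in (X < _)%N](expn0 p) ltn_exp2l ?prime_gt1.
have /hasP [g _ prim_g] : has (q.-1).-primitive_root rs.
  apply: has_prim_root.
  - by rewrite -ltnS prednK.
  - apply/allP => x; rewrite mem_enum /= => x0; apply/unity_rootP.
    apply: (mulIf x0); rewrite mul1r -exprSr prednK // -cardF; exact: expf_card.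
  - exact: enum_uniq.
  - by rewrite -cardE cardC1 cardF.
set k := (q.-1 %/ N)%N.
have qk : q.-1 = (k * N)%N by rewrite divnK.
have kpos : (0 < k)%N.
  by rewrite divn_gt0 //; apply: dvdn_leq => //; rewrite -ltnS prednK.
exists (g ^+ k).
have := exp_prim_root prim_g k.
have -> : gcdn k q.-1 = k by apply/gcdn_idPl; rewrite qk dvdn_mulr.
by rewrite {1}qk mulKn.
Qed.


Lemma cop_nat (p N : nat) : prime p -> (0 < N)%N -> all (fun q => q != p) (primes N) -> coprime p N.
Proof.
move=> hp N0 H; rewrite prime_coprime //; apply/negP => d.
have : p \in primes N by rewrite mem_primes hp N0 d.
by move/allP: H => H /H; rewrite eqxx.
Qed.

Section Transfer.
Variable p : nat.
Hypothesis hp : prime p.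
Variable F : finFieldType.
Hypothesis pcF : p \in [pchar F].
Let K := pPrimeCharType pcF.
Local Notation f := (in_alg K).

Lemma fbin m : f (binsum p m) = \sum_(k < (p %/ 4).+1) ('C(4 * k, 2 * k))%:R / (m%:R) ^+ k.
Proof.
rewrite /binsum rmorph_sum; apply: eq_bigr => k _.
by rewrite fmorph_div rmorphXn !rmorph_nat.
Qed.

Lemma fleg : f (legsign p) = (-1) ^+ (p.-1)./2.
Proof. by rewrite /legsign rmorphXn rmorphN1. Qed.

Lemma fLS m : f (legsign p * binsum p m) =
  (-1) ^+ (p.-1)./2 * \sum_(k < (p %/ 4).+1) ('C(4 * k, 2 * k))%:R / (m%:R) ^+ k.
Proof. by rewrite rmorphM; congr (_ * _); [exact: fleg | exact: fbin]. Qed.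
End Transfer.

Lemma main20 (p : nat) (hp : prime p) (hodd : odd p) : (p != 5%N ->
     [/\ (p %% 5 = 1)%N -> legsign p * binsum p 20 = 1,
         (p %% 5 = 4)%N -> legsign p * binsum p 20 = -1,
         (p %% 5 = 3)%N -> legsign p * binsum p 20 = 2
       & (p %% 5 = 2)%N -> legsign p * binsum p 20 = -2]).
Proof.
have p2 : (2 != p)%N by apply/eqP => p2; move: hodd; rewrite -p2.
move=> p5.
have pr : primes 20 = [:: 2; 5]%N by vm_compute.
have cop : coprime p 20 by apply: cop_nat => //; rewrite pr /= p2 eq_sym p5.
have [F [pcF [z hz]]] := @exists_prim p 20 hp isT cop.
have pcK : p \in [pchar (pPrimeCharType pcF)] := pcF.
have H := @case20 (pPrimeCharType pcF) p pcK hodd p5 (z : pPrimeCharType pcF) hz.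
have t2 : 2 != 0 :> pPrimeCharType pcF by apply: two_neq0 pcK hodd.
split => hm; apply: (fmorph_inj (in_alg (pPrimeCharType pcF)));
  apply: (etrans (@fLS _ _ pcF 20)); apply: (etrans H); rewrite hm /tab5 /=.
all: rewrite ?rmorphN ?rmorph1 ?rmorph_nat -?in_algE ?rmorphN ?rmorph1 ?rmorph_nat.
all: by field; exact: t2.
Qed.

Lemma main52 (p : nat) (hp : prime p) (hodd : odd p) : (p != 13%N -> p != 3%N ->
     [/\ (p %% 13 \in [:: 1; 3; 9])%N -> legsign p * binsum p 52 = 1,
         (p %% 13 \in [:: 12; 10; 4])%N -> legsign p * binsum p 52 = -1,
         (p %% 13 \in [:: 2; 5; 6])%N -> legsign p * binsum p 52 = 2 / 3
       & (p %% 13 \in [:: 11; 8; 7])%N -> legsign p * binsum p 52 = - (2 / 3)]).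
Proof.
have p2 : (2 != p)%N by apply/eqP => p2; move: hodd; rewrite -p2.
move=> p13 p3.
have pr : primes 52 = [:: 2; 13]%N by vm_compute.
have pr3 : primes 3 = [:: 3]%N by vm_compute.
have cop : coprime p 52 by apply: cop_nat => //; rewrite pr /= p2 eq_sym p13.
have [F [pcF [z hz]]] := @exists_prim p 52 hp isT cop.
have pcK : p \in [pchar (pPrimeCharType pcF)] := pcF.
have H := @case52 (pPrimeCharType pcF) p pcK hodd p13 p3 (z : pPrimeCharType pcF) hz.
have t2 : 2 != 0 :> pPrimeCharType pcF by apply: two_neq0 pcK hodd.
have t3 : 3 != 0 :> pPrimeCharType pcF by apply: (@ndvd_of _ _ pcK 3) => //; rewrite pr3 /= eq_sym p3.
split => hm; apply: (fmorph_inj (in_alg (pPrimeCharType pcF)));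
  apply: (etrans (@fLS _ _ pcF 52)); apply: (etrans H); move: hm; rewrite !inE => /or3P[]/eqP ->; rewrite /tab13 /=.
all: rewrite ?fmorph_div ?rmorphN ?rmorph1 ?rmorph_nat -?in_algE ?fmorph_div ?rmorphN ?rmorph1 ?rmorph_nat ?fmorph_div ?rmorph_nat.
all: field.
all: try exact: t2.
all: have t6 : 6 != 0 :> pPrimeCharType pcF by rewrite (_ : 6 = 2 * 3) ?mulf_neq0 // -natrM.
all: by apply/andP; split; [exact: t3 | exact: t6].
Qed.

Lemma main17 (p : nat) (hp : prime p) (hodd : odd p) : (p != 17%N ->
     [/\ (p %% 17 \in [:: 1; 16; 4; 13])%N -> binsum p 17 = 1,
         (p %% 17 \in [:: 2; 15; 8; 9])%N -> binsum p 17 = -1,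
         (p %% 17 \in [:: 3; 14; 5; 12])%N -> binsum p 17 = 4
       & (p %% 17 \in [:: 6; 11; 7; 10])%N -> binsum p 17 = -4]).
Proof.
move=> p17.
have pr : primes 17 = [:: 17]%N by vm_compute.
have cop : coprime p 17 by apply: cop_nat => //; rewrite pr /= eq_sym p17.
have [F [pcF [z hz]]] := @exists_prim p 17 hp isT cop.
have pcK : p \in [pchar (pPrimeCharType pcF)] := pcF.
have H := @case17 (pPrimeCharType pcF) p pcK hodd p17 (z : pPrimeCharType pcF) hz.
have t2 : 2 != 0 :> pPrimeCharType pcF by apply: two_neq0 pcK hodd.
split => hm; apply: (fmorph_inj (in_alg (pPrimeCharType pcF)));
  apply: (etrans (@fbin _ _ pcF 17)); rewrite -[X in X = _]mul1r; apply: (etrans H); move: hm; rewrite !inE => /or4P[]/eqP ->; rewrite /tab17 /=.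
all: rewrite ?rmorphN ?rmorph1 ?rmorph_nat -?in_algE ?rmorphN ?rmorph1 ?rmorph_nat.
all: by field; exact: t2.
Qed.

Theorem corollary2p9 (p : nat) (hp : prime p) (hodd : odd p) :
  (p != 5%N ->
     [/\ (p %% 5 = 1)%N -> legsign p * binsum p 20 = 1,
         (p %% 5 = 4)%N -> legsign p * binsum p 20 = -1,
         (p %% 5 = 3)%N -> legsign p * binsum p 20 = 2
       & (p %% 5 = 2)%N -> legsign p * binsum p 20 = -2]) /\
  (p != 13%N -> p != 3%N ->
     [/\ (p %% 13 \in [:: 1; 3; 9])%N -> legsign p * binsum p 52 = 1,
         (p %% 13 \in [:: 12; 10; 4])%N -> legsign p * binsum p 52 = -1,
         (p %% 13 \in [:: 2; 5; 6])%N -> legsign p * binsum p 52 = 2 / 3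
       & (p %% 13 \in [:: 11; 8; 7])%N -> legsign p * binsum p 52 = - (2 / 3)]) /\
  (p != 17%N ->
     [/\ (p %% 17 \in [:: 1; 16; 4; 13])%N -> binsum p 17 = 1,
         (p %% 17 \in [:: 2; 15; 8; 9])%N -> binsum p 17 = -1,
         (p %% 17 \in [:: 3; 14; 5; 12])%N -> binsum p 17 = 4
       & (p %% 17 \in [:: 6; 11; 7; 10])%N -> binsum p 17 = -4]).
Proof.
split; first exact: main20.
split; first exact: main52.
exact: main17.
Qed.
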